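(* Let $F$ be a field, let $A$ be a finitely generated associative unital $F$-algebra, and let $n\ge 1$. Then the matrix algebra $M_n(A)$ of $n\times n$ matrices over $A$ is finitely presented if and only if $A$ is finitely presented.
   Context: An associative unital $F$-algebra $A$ is finitely presented if it is generated by finitely many elements $a_1,\dots,a_m$ and the kernel of the homomorphism $F\langle x_1,\dots,x_m\rangle\to A$, $x_i\mapsto a_i$, from the free associative algebra is finitely generated as a two-sided ideal (this does not depend on the choice of finite generating set). *)

(* Defs.v *)
From mathcomp Require Import all_boot all_order all_algebra.
Set Implicit Arguments. Unset Strict Implicit. Unset Printing Implicit Defensive.
Import GRing.Theory.
Local Open Scope ring_scope.

(* The free associative unital algebra F<x_0,...,x_(m-1)> is modelled as formal
   finite F-linear combinations of words in the letters 'I_m, two formal sums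
   being identified when they have the same coefficient on every word.       *)
Definition word (m : nat) := seq 'I_m.
Definition ncpoly (F : Type) (m : nat) := seq (F * word m).

Section FreeAlg.
Variables (F : nzRingType) (m : nat).

Definition nccoef (p : ncpoly F m) (w : word m) : F :=
  \sum_(e <- p | e.2 == w) e.1.

Definition ncequiv (p q : ncpoly F m) : Prop :=
  forall w, nccoef p w = nccoef q w.

Definition nceval (R : pzRingType) (s : F -> R) (a : 'I_m -> R)
  (p : ncpoly F m) : R :=
  \sum_(e <- p) s e.1 * \prod_(i <- e.2) a i.

Definition ncsandwich (c : F) (u : word m) (r : ncpoly F m) (u' : word m)
  : ncpoly F m := [seq (c * e.1, u ++ e.2 ++ u') | e <- r].

Definition in_ideal (k : nat) (rels : 'I_k -> ncpoly F m) (p : ncpoly F m)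
  : Prop :=
  exists t : seq (F * word m * 'I_k * word m),
    ncequiv p (flatten [seq ncsandwich t_.1.1.1 t_.1.1.2 (rels t_.1.2) t_.2
                       | t_ <- t]).
End FreeAlg.

Section FP.
Variables (F : fieldType) (R : pzRingType) (s : F -> R).

Definition generates (m : nat) (a : 'I_m -> R) : Prop :=
  forall x : R, exists p : ncpoly F m, nceval s a p = x.

Definition fg_kernel (m : nat) (a : 'I_m -> R) : Prop :=
  exists (k : nat) (rels : 'I_k -> ncpoly F m),
    (forall i, nceval s a (rels i) = 0) /\
    (forall p : ncpoly F m, nceval s a p = 0 -> in_ideal rels p).

Definition fin_gen_with : Prop :=
  exists (m : nat) (a : 'I_m -> R), generates a.

Definition fin_pres_with : Prop :=
  exists (m : nat) (a : 'I_m -> R), generates a /\ fg_kernel a.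
End FP.

Definition fin_gen_alg (F : fieldType) (A : algType F) : Prop :=
  fin_gen_with (fun c : F => c%:A : A).
Definition fin_pres_alg (F : fieldType) (A : algType F) : Prop :=
  fin_pres_with (fun c : F => c%:A : A).

Definition fin_pres_matrix (F : fieldType) (A : algType F) (n : nat) : Prop :=
  fin_pres_with (fun c : F => (c%:A)%:M : 'M[A]_n).

(* Main.v *)
Require Import Defs.
From HB Require Import structures.
From mathcomp Require Import all_boot all_order all_algebra.
From mathcomp Require Import finmap.
From mathcomp.multinomials Require Import monalg.
Set Implicit Arguments. Unset Strict Implicit. Unset Printing Implicit Defensive.
Import GRing.Theory.
Local Open Scope ring_scope.

Section FA.
Variable F : fieldType.
Definition FA (I : choiceType) := {malg F[fmonom I]}.
Definition X {I : choiceType} (i : I) : FA I := << fmu i >>.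
Definition wprod (S : nzRingType) (I : choiceType) (a : I -> S) (k : fmonom I) : S :=
  \prod_(i <- (k : seq I)) a i.
Definition ev (S : nzRingType) (s : {rmorphism F -> S}) (I : choiceType) (a : I -> S)
  (g : FA I) : S := mmap s (wprod a) g.

Section Ev.
Variables (S : nzRingType) (s : {rmorphism F -> S}) (I : choiceType) (a : I -> S).
Local Notation ev := (ev s a).

Lemma evB g h : ev (g - h) = ev g - ev h.
Proof. exact: mmapB. Qed.
Lemma evD g h : ev (g + h) = ev g + ev h.
Proof. exact: mmapD. Qed.
Lemma ev0 : ev 0 = 0.
Proof. exact: mmap0. Qed.
Lemma evN g : ev (- g) = - ev g.
Proof. exact: mmapN. Qed.
Lemma ev_sum (T : Type) (r : seq T) (P : pred T) (G : T -> FA I) :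
  ev (\sum_(x <- r | P x) G x) = \sum_(x <- r | P x) ev (G x).
Proof. exact: (big_morph _ evD ev0). Qed.
Lemma evU c k : ev << c *g k >> = s c * wprod a k.
Proof. exact: mmapU. Qed.
Lemma wprodM k1 k2 : wprod a (mmul k1 k2) = wprod a k1 * wprod a k2.
Proof. by rewrite /wprod fmM big_cat. Qed.
Lemma wprod1 : wprod a mone = 1.
Proof. by rewrite /wprod fm1 big_nil. Qed.
Lemma evC c : ev c%:MP = s c.
Proof. by rewrite evU wprod1 mulr1. Qed.
Lemma ev1 : ev 1 = 1.
Proof. by rewrite -mpolyC1E evC rmorph1. Qed.
Lemma evX i : ev (X i) = a i.
Proof. by rewrite /X evU rmorph1 mul1r /wprod fmU big_seq1. Qed.

Hypothesis hc : forall c x, s c * x = x * s c.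
Lemma evM g1 g2 : ev (g1 * g2) = ev g1 * ev g2.
Proof.
rewrite malgME ev_sum [ev g1]mmapE mulr_suml; apply: eq_bigr=> i _.
rewrite ev_sum [ev g2]mmapE mulr_sumr; apply: eq_bigr=> j _.
rewrite evU rmorphM wprodM -!mulrA; congr (_ * _).
by rewrite !mulrA hc.
Qed.
End Ev.

Section Ind.
Variable I : choiceType.
Lemma monU1 (k : fmonom I) : << k >> = \prod_(i <- (k : seq I)) (X i : FA I).
Proof.
case: k => w; elim: w => [|i w IH] /=.
  rewrite big_nil -mpolyC1E; congr << _ *g _ >>; apply: val_inj; by rewrite /= fm1.
rewrite big_cons -IH /X malgM_def fgmulUU mulr1; congr << _ *g _ >>.
apply: val_inj; by rewrite /= /mmul /mul /= fmmulE fmuE.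
Qed.
Lemma monU (c : F) (k : fmonom I) : << c *g k >> = c%:MP * \prod_(i <- (k : seq I)) (X i : FA I).
Proof. by rewrite -monU1 malgM_def fgmulUU mulr1 mul1m. Qed.

Lemma FA_ind (P : FA I -> Prop) :
  (forall c, P c%:MP) -> (forall i, P (X i)) ->
  (forall g h, P g -> P h -> P (g + h)) -> (forall g h, P g -> P h -> P (g * h)) ->
  forall g, P g.
Proof.
move=> hC hX hD hM g; rewrite (monalgE g); apply: big_ind => //.
  by rewrite -malgC0E.
move=> k _; rewrite monU; apply: (hM) => //; apply: big_ind => //.
by rewrite -mpolyC1E.
Qed.
End Ind.
End FA.
Arguments X {F I} i.
Lemma evMn (F : fieldType) (S : nzRingType) (s : {rmorphism F -> S}) (I : choiceType) (a : I -> S) g k :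
  ev s a (g *+ k) = ev s a g *+ k.
Proof. exact: mmapMn. Qed.

Section Ideal.
Variable F : fieldType.
Local Notation FA := (FA F).

Lemma malgC_central (I : choiceType) (c : F) (g : FA I) : c%:MP * g = g * c%:MP.
Proof.
elim/FA_ind: g => [d|i|g h IHg IHh|g h IHg IHh].
- by rewrite -!mpolyCM mulrC.
- by rewrite /X !malgM_def !fgmulUU mulr1 mul1r mul1m mulm1.
- by rewrite mulrDr mulrDl IHg IHh.
- by rewrite mulrA IHg -mulrA IHh mulrA.
Qed.

Definition sub (I J : choiceType) (P : I -> FA J) (g : FA I) : FA J := ev malgC P g.

Lemma eq_ev (S : nzRingType) (s : {rmorphism F -> S}) (I : choiceType) (a a' : I -> S) g :
  a =1 a' -> ev s a g = ev s a' g.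
Proof.
move=> e; rewrite /ev !mmapE; apply: eq_bigr => k _; congr (_ * _).
by apply: eq_bigr.
Qed.

Lemma ev_hom (S S' : nzRingType) (s : {rmorphism F -> S}) (s' : {rmorphism F -> S'})
  (I : choiceType) (a : I -> S) (a' : I -> S') (phi : S -> S')
  (phiD : forall x y, phi (x + y) = phi x + phi y) (phi0 : phi 0 = 0)
  (phiM : forall x y, phi (x * y) = phi x * phi y) (phi1 : phi 1 = 1)
  (hs : forall c, phi (s c) = s' c) (ha : forall i, phi (a i) = a' i) g :
  phi (ev s a g) = ev s' a' g.
Proof.
rewrite /ev !mmapE (big_morph _ phiD phi0); apply: eq_bigr => k _.
rewrite phiM hs /wprod (big_morph _ phiM phi1); congr (_ * _).
by apply: eq_bigr.
Qed.

Lemma ev_comp (S : nzRingType) (s : {rmorphism F -> S}) (hc : forall c x, s c * x = x * s c)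
  (I J : choiceType) (b : J -> S) (P : I -> FA J) g :
  ev s b (sub P g) = ev s (fun i => ev s b (P i)) g.
Proof.
apply: ev_hom => //.
- exact: evD. - exact: ev0. - exact: evM. - exact: ev1. - exact: evC.
Qed.

Lemma subD (I J : choiceType) (P : I -> FA J) g h : sub P (g + h) = sub P g + sub P h.
Proof. exact: evD. Qed.
Lemma subM (I J : choiceType) (P : I -> FA J) g h : sub P (g * h) = sub P g * sub P h.
Proof. apply: evM => c x; exact: malgC_central. Qed.
Lemma subC (I J : choiceType) (P : I -> FA J) c : sub P c%:MP = c%:MP.
Proof. exact: evC. Qed.
Lemma subX (I J : choiceType) (P : I -> FA J) i : sub P (X i) = P i.
Proof. exact: evX. Qed.
Lemma sub0 (I J : choiceType) (P : I -> FA J) : sub P 0 = 0.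
Proof. exact: ev0. Qed.
Lemma subB (I J : choiceType) (P : I -> FA J) g h : sub P (g - h) = sub P g - sub P h.
Proof. exact: evB. Qed.

Inductive idl (I : choiceType) (rs : seq (FA I)) : FA I -> Prop :=
| idl0 : idl rs 0
| idlG l r u : r \in rs -> idl rs (l * r * u)
| idlD g h : idl rs g -> idl rs h -> idl rs (g + h).

Section IdlTheory.
Variables (I : choiceType) (rs : seq (FA I)).
Lemma idl_r r : r \in rs -> idl rs r.
Proof. by move=> h; have := idlG 1 1 h; rewrite mul1r mulr1. Qed.
Lemma idlMl x g : idl rs g -> idl rs (x * g).
Proof.
elim=> [|l r u h|g1 g2 _ h1 _ h2]; first by rewrite mulr0; apply: idl0.
  by rewrite !mulrA; apply: idlG.
by rewrite mulrDr; apply: idlD.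
Qed.
Lemma idlMr x g : idl rs g -> idl rs (g * x).
Proof.
elim=> [|l r u h|g1 g2 _ h1 _ h2]; first by rewrite mul0r; apply: idl0.
  by rewrite -mulrA; apply: idlG.
by rewrite mulrDl; apply: idlD.
Qed.
Lemma idlN g : idl rs g -> idl rs (- g).
Proof. by move=> h; rewrite -mulN1r; apply: idlMl. Qed.
Lemma idlB g h : idl rs g -> idl rs h -> idl rs (g - h).
Proof. by move=> h1 h2; apply: idlD => //; apply: idlN. Qed.
Lemma idl_sum (T : Type) (r : seq T) (P : pred T) (G : T -> FA I) :
  (forall x, P x -> idl rs (G x)) -> idl rs (\sum_(x <- r | P x) G x).
Proof. move=> h; apply: big_ind => //; [exact: idl0 | exact: idlD]. Qed.
Lemma idl_sub rs' g : {subset rs <= rs'} -> idl rs g -> idl rs' g.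
Proof.
move=> sub; elim=> [|l r u h|g1 g2 _ h1 _ h2]; [exact: idl0| |exact: idlD].
by apply: idlG; apply: sub.
Qed.
Lemma idl_hom (J : choiceType) (phi : FA I -> FA J)
  (phiD : forall x y, phi (x + y) = phi x + phi y) (phi0 : phi 0 = 0)
  (phiM : forall x y, phi (x * y) = phi x * phi y) g :
  idl rs g -> idl (map phi rs) (phi g).
Proof.
elim=> [|l r u h|g1 g2 _ h1 _ h2]; first by rewrite phi0; apply: idl0.
  by rewrite !phiM; apply: idlG; apply: map_f.
by rewrite phiD; apply: idlD.
Qed.

Definition cong (x y : FA I) := idl rs (x - y).
Lemma cong_refl x : cong x x.
Proof. by rewrite /cong subrr; exact: idl0. Qed.
Lemma cong_sym x y : cong x y -> cong y x.
Proof. by rewrite /cong => h; rewrite -opprB; apply: idlN. Qed.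
Lemma cong_trans x y z : cong x y -> cong y z -> cong x z.
Proof.
by rewrite /cong => h1 h2; have := idlD h1 h2; rewrite addrA subrK.
Qed.
Lemma congD x x' y y' : cong x x' -> cong y y' -> cong (x + y) (x' + y').
Proof.
rewrite /cong => h1 h2; have := idlD h1 h2.
by rewrite opprD addrACA.
Qed.
Lemma congM x x' y y' : cong x x' -> cong y y' -> cong (x * y) (x' * y').
Proof.
rewrite /cong => h1 h2.
have -> : x * y - x' * y' = (x - x') * y + x' * (y - y').
  by rewrite mulrBl mulrBr addrA subrK.
by apply: idlD; [apply: idlMr | apply: idlMl].
Qed.
Lemma cong_idl x y : cong x y -> idl rs y -> idl rs x.
Proof. by rewrite /cong => h1 h2; have := idlD h1 h2; rewrite subrK. Qed.
Lemma cong_sum (T : Type) (r : seq T) (P : pred T) (G G' : T -> FA I) :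
  (forall x, P x -> cong (G x) (G' x)) ->
  cong (\sum_(x <- r | P x) G x) (\sum_(x <- r | P x) G' x).
Proof.
move=> h; rewrite /cong -sumrB; apply: idl_sum => x Px; exact: h.
Qed.
End IdlTheory.

Definition genI (S : nzRingType) (s : {rmorphism F -> S}) (I : choiceType) (a : I -> S) :=
  forall x : S, exists g : FA I, ev s a g = x.
Definition kerfg (S : nzRingType) (s : {rmorphism F -> S}) (I : choiceType) (a : I -> S) :=
  exists rs : seq (FA I), (forall r, r \in rs -> ev s a r = 0) /\
    (forall g, ev s a g = 0 -> idl rs g).

Section ChangeGen.
Variables (S : nzRingType) (s : {rmorphism F -> S}).
Hypothesis hc : forall c x, s c * x = x * s c.

Lemma gen_trans (I J : finType) (a : I -> S) (b : J -> S) :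
  genI s a -> (forall i, exists g, ev s b g = a i) -> genI s b.
Proof.
move=> ga hb x; have [P hP] := fin_all_exists hb.
have [g <-] := ga x; exists (sub P g).
by rewrite ev_comp //; apply: eq_ev.
Qed.

Lemma change_gen (I J : finType) (a : I -> S) (b : J -> S) :
  genI s a -> kerfg s a -> genI s b -> kerfg s b.
Proof.
move=> ga [rs [rs0 rsk]] gb.
have [P hP] := fin_all_exists (fun i => gb (a i)).
have [Q hQ] := fin_all_exists (fun j => ga (b j)).
pose rs' := map (sub P) rs ++ [seq X j - sub P (Q j) | j <- enum J].
exists rs'; split.
  move=> r; rewrite mem_cat => /orP [/mapP [r0 r0in ->]|/mapP [j _ ->]].
    by rewrite ev_comp // -(rs0 _ r0in); apply: eq_ev.
  by rewrite evB evX ev_comp // (eq_ev _ _ hP) hQ subrr.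
have key : forall g, cong rs' g (sub P (sub Q g)).
  elim/FA_ind => [c|j|g h IHg IHh|g h IHg IHh].
  - by rewrite !subC; apply: cong_refl.
  - rewrite subX; apply: idl_r; rewrite mem_cat; apply/orP; right.
    by apply: map_f; rewrite mem_enum.
  - by rewrite !subD; apply: congD.
  - by rewrite !subM; apply: congM.
move=> g g0; apply: cong_idl (key g) _.
have : idl rs (sub Q g).
  apply: rsk; rewrite ev_comp // -g0; apply: eq_ev => j; exact: hQ.
move/(idl_hom (subD P) (sub0 P) (subM P)); apply: idl_sub.
by move=> r rin; rewrite mem_cat rin.
Qed.
End ChangeGen.
End Ideal.

Section Link.
Variable F : fieldType.
Local Notation FA := (FA F).

Lemma fmulE (I : choiceType) (k1 k2 : fmonom I) :
  mmul k1 k2 = FMonom ((k1 : seq I) ++ (k2 : seq I)).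
Proof. by rewrite /mmul /mul /= fmmulE. Qed.

Lemma sum3 (R : pzRingType) (T1 T2 : Type) (r1 : seq T1) (r2 : seq T2) (f : T1 -> R) (g : T2 -> R) x y z :
  x = \sum_(i <- r1) f i -> z = \sum_(j <- r2) g j ->
  x * y * z = \sum_(i <- r1) \sum_(j <- r2) f i * y * g j.
Proof.
move=> -> ->; rewrite mulr_suml mulr_suml; apply: eq_bigr => i _.
by rewrite mulr_sumr.
Qed.

Section M.
Variable m : nat.
Definition toFA (p : ncpoly F m) : FA 'I_m :=
  \sum_(e <- p) << e.1 *g FMonom e.2 >>.

Lemma coef_toFA p w : (toFA p)@_(FMonom w) = nccoef p w.
Proof.
rewrite /toFA /nccoef raddf_sum [RHS]big_mkcond /=; apply: eq_bigr => e _.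
by rewrite (@mcoeffU _ F) fmP /= mulrb.
Qed.

Lemma ncequiv_toFA p q : ncequiv p q <-> toFA p = toFA q.
Proof.
split=> [h|h w]; last by rewrite -!coef_toFA h.
apply/malgP => k; by rewrite -(fmK k) !coef_toFA.
Qed.

Lemma nceval_toFA (S : nzRingType) (s : {rmorphism F -> S}) (a : 'I_m -> S) p :
  nceval s a p = ev s a (toFA p).
Proof. by rewrite /nceval /toFA ev_sum; apply: eq_bigr => e _; rewrite evU. Qed.

Definition fromFA (g : FA 'I_m) : ncpoly F m := [seq (g@_k, (k : seq 'I_m)) | k <- msupp g].

Lemma toFA_fromFA g : toFA (fromFA g) = g.
Proof.
rewrite /toFA /fromFA big_map [RHS]monalgE; apply: eq_bigr => k _ /=.
by rewrite fmK.
Qed.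

Lemma toFA_cat p q : toFA (p ++ q) = toFA p + toFA q.
Proof. by rewrite /toFA big_cat. Qed.

Lemma toFA_flatten (L : seq (ncpoly F m)) : toFA (flatten L) = \sum_(p <- L) toFA p.
Proof.
elim: L => [|p L IH]; first by rewrite big_nil /toFA big_nil.
by rewrite /= toFA_cat IH big_cons.
Qed.

Lemma toFA_sandwich c d u r u' :
  toFA (ncsandwich (c * d) u r u') = << c *g FMonom u >> * toFA r * << d *g FMonom u' >>.
Proof.
rewrite /ncsandwich /toFA big_map mulr_sumr mulr_suml; apply: eq_bigr => e _.
rewrite !malgM_def !fgmulUU !fmulE /= catA; congr << _ *g _ >>.
by rewrite mulrAC.
Qed.

Definition sandw k (rels : 'I_k -> ncpoly F m) (t : seq (F * word m * 'I_k * word m)) :=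
  flatten [seq ncsandwich t_.1.1.1 t_.1.1.2 (rels t_.1.2) t_.2 | t_ <- t].

Lemma idl_inideal k (rels : 'I_k -> ncpoly F m) g :
  idl [seq toFA (rels i) | i <- enum 'I_k] g -> exists t, g = toFA (sandw rels t).
Proof.
elim=> [|l r u|g1 g2 _ [t1 ->] _ [t2 ->]].
- by exists [::]; rewrite /sandw /= /toFA big_nil.
- move=> /mapP [i _ ->].
  exists [seq (l@_k1 * u@_k2, (k1 : seq _), i, (k2 : seq _)) | k1 <- msupp l, k2 <- msupp u].
  rewrite /sandw toFA_flatten big_map big_allpairs_dep.
  rewrite (sum3 _ (monalgE l) (monalgE u)); apply: eq_bigr => k1 _.
  apply: eq_bigr => k2 _ /=.
  by rewrite toFA_sandwich !fmK.
- by exists (t1 ++ t2); rewrite /sandw map_cat flatten_cat toFA_cat.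
Qed.

Lemma inideal_idl k (rels : 'I_k -> ncpoly F m) p :
  in_ideal rels p -> idl [seq toFA (rels i) | i <- enum 'I_k] (toFA p).
Proof.
move=> [t /ncequiv_toFA ->]; rewrite toFA_flatten big_map.
apply: idl_sum => x _.
rewrite -[x.1.1.1]mulr1 toFA_sandwich; apply: idlG; apply: map_f.
by rewrite mem_enum.
Qed.

End M.

Section FP.
Variables (S : nzRingType) (s : {rmorphism F -> S}).
Hypothesis hc : forall c x, s c * x = x * s c.

Lemma fp_to_int : fin_pres_with s -> exists m (a : 'I_m -> S), genI s a /\ kerfg s a.
Proof.
move=> [m [a [ga [k [rels [r0 rk]]]]]]; exists m, a; split.
  move=> x; have [p <-] := ga x; exists (toFA p); by rewrite nceval_toFA.
exists [seq toFA (rels i) | i <- enum 'I_k]; split.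
  by move=> r /mapP [i _ ->]; rewrite -nceval_toFA.
move=> g g0; rewrite -(toFA_fromFA g); apply: inideal_idl; apply: rk.
by rewrite nceval_toFA toFA_fromFA.
Qed.

Lemma int_to_fp m (a : 'I_m -> S) : genI s a -> kerfg s a -> fin_pres_with s.
Proof.
move=> ga [rs [r0 rk]]; exists m, a; split.
  move=> x; have [g <-] := ga x; exists (fromFA g); by rewrite nceval_toFA toFA_fromFA.
exists (size rs), (fun i => fromFA (nth 0 rs i)); split.
  by move=> i; rewrite nceval_toFA toFA_fromFA r0 // mem_nth.
move=> p p0.
have h1 : idl rs (toFA p) by apply: rk; rewrite -nceval_toFA.
have h2 : idl [seq toFA (fromFA (nth 0 rs i)) | i : 'I_(size rs) <- enum 'I_(size rs)] (toFA p).
  apply: idl_sub h1 => r rin; have hi : (index r rs < size rs)%N by rewrite index_mem.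
  apply/mapP; exists (Ordinal hi); first by rewrite mem_enum.
  by rewrite toFA_fromFA /= nth_index.
have [t ht] := idl_inideal h2; exists t; apply/ncequiv_toFA; exact: ht.
Qed.

Lemma fpT_to_fp (I : finType) (a : I -> S) : genI s a -> kerfg s a -> fin_pres_with s.
Proof.
move=> ga ka; pose b := fun j : 'I_#|I| => a (enum_val j).
have gb : genI s b.
  apply: (gen_trans hc ga) => i; exists (X (enum_rank i)).
  by rewrite evX /b enum_rankK.
exact: (int_to_fp gb (change_gen hc ga ka gb)).
Qed.

Lemma fp_to_fpT : fin_pres_with s -> forall (I : finType) (a : I -> S), genI s a -> kerfg s a.
Proof.
move=> /fp_to_int [m [a [ga ka]]] I b gb; exact: (change_gen hc ga ka gb).
Qed.
End FP.
End Link.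

Lemma sum_only (V : nmodType) (k : nat) (f : 'I_k -> V) i :
  (forall p, p != i -> f p = 0) -> \sum_p f p = f i.
Proof. by move=> h; rewrite (bigD1 i) //= big1 ?addr0. Qed.
Arguments sum_only {V k f} i _.

Section Mx.
Variables (R : nzRingType) (n : nat).
Local Notation N := n.+1.
Lemma mxmulE (B C : 'M[R]_N) i j : (B * C) i j = \sum_k B i k * C k j.
Proof. by rewrite -mulmxE mxE. Qed.
Lemma mxaddE (B C : 'M[R]_N) i j : (B + C) i j = B i j + C i j.
Proof. by rewrite mxE. Qed.
Lemma mxscalE (x : R) i j : (x%:M : 'M[R]_N) i j = x *+ (i == j).
Proof. by rewrite mxE. Qed.
Lemma mxoneE i j : (1 : 'M[R]_N) i j = (i == j)%:R.
Proof. by rewrite mxE. Qed.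
Lemma mxzeroE i j : (0 : 'M[R]_N) i j = 0.
Proof. by rewrite mxE. Qed.
Lemma sumdl (f : 'I_N -> R) i x : \sum_k (x *+ (i == k)) * f k = x * f i.
Proof.
rewrite (bigD1 i) //= eqxx mulr1n big1 ?addr0 // => k /negbTE.
by rewrite eq_sym => ->; rewrite mulr0n mul0r.
Qed.
Lemma sumdr (f : 'I_N -> R) j x : \sum_k f k * (x *+ (k == j)) = f j * x.
Proof.
rewrite (bigD1 j) //= eqxx mulr1n big1 ?addr0 // => k /negbTE ->.
by rewrite mulr0n mulr0.
Qed.
Lemma scal_central x : (forall y, x * y = y * x) -> forall B : 'M[R]_N, x%:M * B = B * x%:M.
Proof.
move=> hx B; apply/matrixP => i j; rewrite !mxmulE.
under eq_bigr do rewrite mxscalE.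
under [RHS]eq_bigr do rewrite mxscalE.
by rewrite sumdl sumdr hx.
Qed.
Lemma delta_scal (x : R) i j : (delta_mx i j : 'M[R]_N) * x%:M = x *: delta_mx i j.
Proof.
apply/matrixP => p q; rewrite mxmulE.
under eq_bigr do rewrite mxscalE.
by rewrite sumdr !mxE mulr_natl mulr_natr.
Qed.
Lemma sum_delta : \sum_i (delta_mx i i : 'M[R]_N) = 1.
Proof.
apply/matrixP => p q; rewrite summxE mxoneE.
rewrite (bigD1 p) //= big1 ?addr0 => [|i /negbTE hi]; rewrite !mxE.
  by rewrite eqxx /= eq_sym.
by rewrite eq_sym hi.
Qed.
End Mx.

Section Gen.
Variables (R : pzRingType) (cg : R -> R -> Prop).
Hypotheses (crefl : forall x, cg x x) (ctr : forall x y z, cg x y -> cg y z -> cg x z)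
  (csym : forall x y, cg x y -> cg y x)
  (cM : forall x x' y y', cg x x' -> cg y y' -> cg (x * y) (x' * y')).
Variables (N : nat) (e : 'I_N -> 'I_N -> R).
Hypothesis cE : forall i j k l, cg (e i j * e k l) (if j == k then e i l else 0).
Lemma Tgen i j k l o b c : cg (c * e o o) (e o o * c) ->
  cg (e i o * b * e o j * (e k o * c * e o l)) (if j == k then e i o * (b * c) * e o l else 0).
Proof.
move=> hc.
have -> : e i o * b * e o j * (e k o * c * e o l) = e i o * b * (e o j * e k o) * c * e o l.
  by rewrite !mulrA.
apply: (ctr (y := e i o * b * (if j == k then e o o else 0) * c * e o l)).
  apply: cM; last exact: crefl.
  apply: cM; last exact: crefl.
  apply: cM; [exact: crefl | exact: cE].
case: (j == k); last by rewrite !mulr0 !mul0r; exact: crefl.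
apply: (ctr (y := e i o * b * (c * e o o) * e o l)).
  rewrite -(mulrA _ (e o o)); apply: cM; last exact: crefl.
  apply: cM; [exact: crefl | exact: csym].
have -> : e i o * b * (c * e o o) * e o l = e i o * (b * c) * (e o o * e o l) by rewrite !mulrA.
apply: cM; first exact: crefl.
by have := cE o o o l; rewrite eqxx.
Qed.
End Gen.
Lemma gen_comm (R S : pzRingType) (phi : R -> S) (p q : R) (P Q : S) :
  (forall x y, phi (x - y) = phi x - phi y) -> phi (p * q) = phi p * phi q ->
  phi (q * p) = phi q * phi p -> phi p = P -> phi q = Q -> P * Q = Q * P ->
  phi (p * q - q * p) = 0.
Proof. by move=> hB h1 h2 hp hq hc; rewrite hB h1 h2 hp hq hc subrr. Qed.
Lemma central3 (R : pzRingType) (x c y : R) : c * x = x * c -> x * c * y = c * (x * y).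
Proof. by move=> h; rewrite -h mulrA. Qed.

Section Main.
Variables (F : fieldType) (A : algType F) (n m : nat) (a : 'I_m -> A).
Local Notation N := n.+1.
Local Notation FA := (FA F).

Definition sA : {rmorphism F -> A} := in_alg A.
Definition sM : {rmorphism F -> 'M[A]_N} := scalar_mx \o in_alg A.
Definition sP : {rmorphism F -> 'M[FA 'I_m]_N} := scalar_mx \o malgC.
Definition L := ('I_N * 'I_N + 'I_m)%type.
Definition aM (x : L) : 'M[A]_N :=
  match x with inl p => delta_mx p.1 p.2 | inr l => (a l)%:M end.
Definition pgen (x : L) : 'M[FA 'I_m]_N :=
  match x with inl p => delta_mx p.1 p.2 | inr l => (X l)%:M end.
Definition E (i j : 'I_N) : FA L := X (inl (i, j)).
Definition Al (l : 'I_m) : FA L := X (inr l).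
Definition iota := sub (fun l => Al l).
Definition psi := ev sP pgen.
Local Notation evA := (ev sA a).
Local Notation evMx := (ev sM aM).

Lemma hA c (x : A) : sA c * x = x * sA c.
Proof. by rewrite /= mulr_algl mulr_algr. Qed.
Lemma hM c (B : 'M[A]_N) : sM c * B = B * sM c.
Proof. apply: scal_central => y; exact: hA. Qed.
Lemma hP c (B : 'M[FA 'I_m]_N) : sP c * B = B * sP c.
Proof. apply: scal_central => y; exact: malgC_central. Qed.

Lemma evA_nat (k : nat) : evA k%:R = k%:R.
Proof. by rewrite evMn ev1. Qed.

Lemma K1 g : evMx g = map_mx evA (psi g).
Proof.
symmetry; apply: ev_hom.
- by move=> x y; apply/matrixP => i j; rewrite !mxE evD.
- by apply/matrixP => i j; rewrite !mxE ev0.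
- move=> x y; apply/matrixP => i j; rewrite mxE !mxmulE ev_sum.
  by apply: eq_bigr => k _; rewrite !mxE evM //; exact: hA.
- by apply/matrixP => i j; rewrite !mxE evA_nat.
- by move=> c; apply/matrixP => i j; rewrite !mxE evMn evC.
- case=> [[i j]|l]; apply/matrixP => p q; rewrite !mxE /=; first by rewrite evA_nat.
  by rewrite evMn evX.
Qed.

Lemma subXid (I : choiceType) (h : FA I) : sub X h = h.
Proof.
elim/FA_ind: h => [c|i|g h IHg IHh|g h IHg IHh].
- exact: subC. - exact: subX.
- by rewrite subD IHg IHh. - by rewrite subM IHg IHh.
Qed.

Lemma K2 h : psi (iota h) = h%:M.
Proof.
rewrite /psi /iota ev_comp; last exact: hP.
rewrite (@eq_ev _ _ _ _ _ (fun l => (X l)%:M)) => [|l]; last by rewrite evX.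
rewrite -[in RHS](subXid h) /sub; symmetry; apply: ev_hom => //.
- by move=> x y; rewrite raddfD.
- by rewrite raddf0.
- by move=> x y; rewrite scalar_mxM mulmxE.
Qed.

Lemma K3 h : evMx (iota h) = (evA h)%:M.
Proof.
by rewrite K1 K2; apply/matrixP => i j; rewrite !mxE evMn.
Qed.


Lemma genM : genI sA a -> genI sM aM.
Proof.
move=> ga B.
have [h hh] := fin_all_exists (fun p : 'I_N * 'I_N => ga (B p.1 p.2)).
exists (\sum_i \sum_j E i j * iota (h (i, j))).
rewrite ev_sum [RHS]matrix_sum_delta; apply: eq_bigr => i _.
rewrite ev_sum; apply: eq_bigr => j _.
rewrite evM; last exact: hM.
by rewrite K3 evX /= delta_scal hh.
Qed.

Lemma psiM g h : psi (g * h) = psi g * psi h.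
Proof. apply: evM; exact: hP. Qed.

Lemma mem_rsA (rs : seq (FA L)) r (x : 'I_N * 'I_N) : r \in rs ->
  (psi r) x.1 x.2 \in [seq (psi r) x.1 x.2 | r <- rs, x <- enum {: 'I_N * 'I_N}].
Proof.
move=> hr; have hx : x \in enum {: 'I_N * 'I_N} by rewrite mem_enum.
exact: (allpairs_f (fun r (x : 'I_N * 'I_N) => psi r x.1 x.2) hr hx).
Qed.

Lemma psiD g h : psi (g + h) = psi g + psi h.
Proof. exact: evD. Qed.

Lemma evMxM (g h : FA L) : evMx (g * h : FA L) = evMx g * evMx h.
Proof. apply: evM; exact: hM. Qed.

Lemma dir1 : genI sA a -> fin_pres_with sM -> fin_pres_with sA.
Proof.
move=> ga fpM.
have [rsM [r0 rk]] := fp_to_fpT hM fpM (genM ga).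
pose rsA := [seq (psi r) x.1 x.2 | r <- rsM, x <- enum {: 'I_N * 'I_N}].
have claim : forall g, idl rsM g -> forall p q, idl rsA ((psi g) p q).
  move=> g; elim => [|l r u hr|g1 g2 _ h1 _ h2] p q.
  - rewrite /psi ev0.
    rewrite mxzeroE.
    exact: (idl0 rsA).
  - rewrite !psiM mxmulE. apply: idl_sum => k _.
    rewrite mxmulE mulr_suml. apply: idl_sum => x _.
    apply: idlG. exact: (mem_rsA (x, k) hr).
  - rewrite /psi evD mxaddE. exact: (idlD (h1 p q) (h2 p q)).
suff ka : kerfg sA a by exact: (fpT_to_fp (fun c x => hA c x) ga ka).
exists rsA; split.
  move=> r /allpairsP [[r1 x] [/= r1in _ ->]].
  have := congr1 (fun B : 'M[A]_N => B x.1 x.2) (K1 r1).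
  by rewrite /= r0 // mxzeroE mxE => <-.
move=> h h0; have := claim _ (rk _ (etrans (K3 h) _)) ord0 ord0.
rewrite K2 mxscalE eqxx mulr1n; apply.
by rewrite h0 raddf0.
Qed.

Definition o : 'I_N := ord0.
Definition R1 : seq (FA L) :=
  [seq E x.1.1.1 x.1.1.2 * E x.1.2 x.2 - (if x.1.1.2 == x.1.2 then E x.1.1.1 x.2 else 0)
  | x <- enum {: 'I_N * 'I_N * 'I_N * 'I_N}].
Definition R2 : seq (FA L) := [:: \sum_i E i i - 1].
Definition R3 : seq (FA L) :=
  [seq Al x.1 * E x.2.1 x.2.2 - E x.2.1 x.2.2 * Al x.1 | x <- enum {: 'I_m * ('I_N * 'I_N)}].
Definition rsMof (rsA : seq (FA 'I_m)) := R1 ++ R2 ++ R3 ++ map iota rsA.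
Definition beta (B : 'M[FA 'I_m]_N) : FA L := \sum_i \sum_j E i o * iota (B i j) * E o j.

Lemma iotaD g h : iota (g + h) = iota g + iota h. Proof. exact: subD. Qed.
Lemma iotaM g h : iota (g * h) = iota g * iota h. Proof. exact: subM. Qed.
Lemma iotaC c : iota c%:MP = c%:MP. Proof. exact: subC. Qed.
Lemma iotaX l : iota (X l) = Al l. Proof. exact: subX. Qed.
Lemma iota_sum (T : Type) (r : seq T) (P : pred T) (G : T -> FA 'I_m) :
  iota (\sum_(x <- r | P x) G x) = \sum_(x <- r | P x) iota (G x).
Proof. exact: ev_sum. Qed.
Lemma iota0 : iota 0 = 0. Proof. exact: sub0. Qed.
Lemma iota_nat k : iota k%:R = k%:R.
Proof. by rewrite /iota /sub evMn ev1. Qed.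

Section Dir2.
Opaque fgmul fgadd fgopp fgzero.

Variable rsA : seq (FA 'I_m).
Local Notation J := (rsMof rsA).
Local Notation cg := (cong J).

Lemma ctr y x z : cg x y -> cg y z -> cg x z.
Proof. exact: cong_trans. Qed.
Arguments ctr y {x z}.
Lemma crefl x : cg x x.
Proof. exact: cong_refl. Qed.

Lemma cE i j k l : cg (E i j * E k l) (if j == k then E i l else 0).
Proof.
apply: idl_r; rewrite /rsMof mem_cat; apply/orP; left.
have hx : (i, j, k, l) \in enum {: 'I_N * 'I_N * 'I_N * 'I_N} by rewrite mem_enum.
exact: (map_f (fun x : 'I_N * 'I_N * 'I_N * 'I_N => E x.1.1.1 x.1.1.2 * E x.1.2 x.2 -
   (if x.1.1.2 == x.1.2 then E x.1.1.1 x.2 else 0)) hx).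
Qed.
Lemma cEt i k l : cg (E i k * E k l) (E i l).
Proof. by have := cE i k k l; rewrite eqxx. Qed.
Lemma cS : cg (\sum_i E i i) 1.
Proof.
apply: idl_r; rewrite /rsMof mem_cat; apply/orP; right.
by rewrite mem_cat mem_seq1 eqxx.
Qed.
Lemma cA l i j : cg (Al l * E i j) (E i j * Al l).
Proof.
apply: idl_r; rewrite /rsMof mem_cat; apply/orP; right.
rewrite mem_cat; apply/orP; right; rewrite mem_cat; apply/orP; left.
have hx : (l, (i, j)) \in enum {: 'I_m * ('I_N * 'I_N)} by rewrite mem_enum.
exact: (map_f (fun x : 'I_m * ('I_N * 'I_N) => Al x.1 * E x.2.1 x.2.2 - E x.2.1 x.2.2 * Al x.1) hx).
Qed.
Lemma iI h : idl rsA h -> idl J (iota h).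
Proof.
move=> hh; have h2 : idl (map iota rsA) (iota h).
  exact: (idl_hom (subD (fun l => Al l)) (sub0 (fun l => Al l)) (subM (fun l => Al l)) hh).
apply: (idl_sub _ h2) => r rin.
by rewrite /rsMof !mem_cat rin !orbT.
Qed.

Lemma cI h i j : cg (iota h * E i j) (E i j * iota h).
Proof.
elim/FA_ind: h => [c|l|g h IHg IHh|g h IHg IHh].
- rewrite iotaC malgC_central; exact: crefl.
- rewrite iotaX; exact: cA.
- rewrite iotaD mulrDl mulrDr; exact: congD.
- rewrite iotaM.
  apply: (ctr (iota g * (E i j * iota h))); first by rewrite -mulrA; apply: congM => //; apply: crefl.
  rewrite !mulrA; apply: congM; [exact: IHg | exact: crefl].
Qed.

Lemma sum1 : cg 1 (\sum_i E i o * E o i).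
Proof.
apply: (ctr (\sum_i E i i)); first exact: cong_sym cS.
apply: cong_sum => i _; apply: cong_sym; exact: cEt.
Qed.

Lemma betaD B C : beta (B + C) = beta B + beta C.
Proof.
rewrite /beta -big_split; apply: eq_bigr => i _.
rewrite -big_split; apply: eq_bigr => j _.
by rewrite mxaddE iotaD mulrDr mulrDl.
Qed.

Lemma beta_scal x : beta (x%:M) = \sum_i E i o * iota x * E o i.
Proof.
apply: eq_bigr => i _; rewrite (bigD1 i) //= mxscalE eqxx mulr1n big1 ?addr0 //.
move=> j /negbTE hj; rewrite mxscalE eq_sym hj mulr0n iota0 mulr0 mul0r //.
Qed.

Lemma beta_delta i j : beta (delta_mx i j) = E i o * E o j.
Proof.
rewrite /beta (sum_only i) => [|p hp]; last first.
  apply: big1 => q _; rewrite mxE (negbTE hp) andFb iota_nat mulr0n mulr0 mul0r //.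
rewrite (sum_only j) => [|q hq]; last first.
  rewrite mxE eqxx (negbTE hq) andbF iota_nat mulr0n mulr0 mul0r //.
by rewrite mxE !eqxx andbT iota_nat mulr1n mulr1.
Qed.

Lemma Tlem i j k l b c : cg (c * E o o) (E o o * c) ->
  cg (E i o * b * E o j * (E k o * c * E o l)) (if j == k then E i o * (b * c) * E o l else 0).
Proof.
apply: (Tgen crefl (fun x y z => @ctr y x z) (@cong_sym _ _ _) (@congM _ _ _) cE).
Qed.

Lemma betaM B C : cg (beta B * beta C) (beta (B * C)).
Proof.
rewrite /beta mulr_suml.
apply: (ctr (\sum_i \sum_j \sum_k \sum_l (if j == k then E i o * (iota (B i j) * iota (C k l)) * E o l else 0))).
  apply: cong_sum => i _; rewrite mulr_suml; apply: cong_sum => j _.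
  rewrite mulr_sumr; apply: cong_sum => k _; rewrite mulr_sumr; apply: cong_sum => l _.
  apply: Tlem; exact: cI.
apply: cong_sum => i _.
rewrite (eq_bigr (fun j => \sum_l E i o * (iota (B i j) * iota (C j l)) * E o l)); last first.
  move=> j _; rewrite (sum_only j) => [|k hk]; first by rewrite eqxx.
  by apply: big1 => l _; rewrite eq_sym (negbTE hk).
rewrite exchange_big /=; apply: cong_sum => l _.
rewrite mxmulE iota_sum mulr_sumr mulr_suml.
apply: cong_sum => j _; rewrite iotaM; exact: crefl.
Qed.

Lemma claim1 g : cg g (beta (psi g)).
Proof.
elim/FA_ind: g => [c|x|g h IHg IHh|g h IHg IHh].
- have -> : psi c%:MP = (c%:MP)%:M by rewrite /psi evC.
  rewrite beta_scal iotaC.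
  have -> : \sum_i E i o * c%:MP * E o i = c%:MP * \sum_i E i o * E o i.
    rewrite mulr_sumr; apply: eq_bigr => i _; apply: central3; exact: malgC_central.
  apply: (ctr (c%:MP * 1)); first by rewrite mulr1; exact: crefl.
  apply: congM; [exact: crefl | exact: sum1].
- case: x => [[i j]|l].
    rewrite /psi evX /= beta_delta; exact: cong_sym (cEt i o j).
  rewrite /psi evX /= beta_scal iotaX.
  apply: (ctr (Al l * 1)); first by rewrite mulr1; exact: crefl.
  apply: (ctr (Al l * \sum_i E i o * E o i)); first by apply: congM; [exact: crefl | exact: sum1].
  rewrite mulr_sumr; apply: cong_sum => i _.
  rewrite (mulrA (Al l) (E i o) (E o i)); apply: congM; [exact: cA l i o | exact: crefl].
- rewrite psiD betaD; exact: (congD IHg IHh).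
- rewrite psiM; apply: (ctr (beta (psi g) * beta (psi h))); first exact: (congM IHg IHh).
  exact: betaM.
Qed.

Lemma claim2 g : (forall h, evA h = 0 -> idl rsA h) -> evMx g = 0 -> idl J (beta (psi g)).
Proof.
move=> rk g0; apply: idl_sum => i _; apply: idl_sum => j _.
apply: idlMr; apply: idlMl; apply: iI; apply: rk.
have := congr1 (fun B : 'M[A]_N => B i j) (K1 g).
by rewrite /= g0 mxzeroE mxE => <-.
Qed.

Lemma vR3 l i j : evMx (Al l * E i j - E i j * Al l) = 0.
Proof.
apply: (gen_comm (phi := evMx) (P := (a l)%:M) (Q := delta_mx i j)).
- exact: evB.
- exact: evMxM.
- exact: evMxM.
- exact: evX.
- exact: evX.
- by rewrite delta_scal -mulmxE mul_scalar_mx.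
Qed.

Lemma vanish : (forall r, r \in rsA -> evA r = 0) -> forall r, r \in J -> evMx r = 0.
Proof.
move=> r0 r; rewrite /rsMof !mem_cat => /orP [|/orP [|/orP []]].
- move=> /mapP [[[[i j] k] l] _ ->] /=.
  rewrite evB evMxM evX evX /= -mulmxE mul_delta_mx_cond.
  by case: (j == k); rewrite ?evX ?ev0 /= ?mulr1n ?mulr0n subrr.
- rewrite mem_seq1 => /eqP ->; rewrite evB ev_sum ev1.
  rewrite (eq_bigr (fun i => delta_mx i i)) => [|i _]; last by rewrite evX.
  by rewrite sum_delta subrr.
- move=> /mapP [[l [i j]] _ ->]; exact: vR3.
- move=> /mapP [r' r'in ->]; by rewrite K3 r0 // raddf0.
Qed.
End Dir2.

Lemma dir2 : genI sA a -> fin_pres_with sA -> fin_pres_with sM.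
Proof.
move=> ga fpA; have [rsA [r0 rk]] := fp_to_fpT (fun c x => hA c x) fpA ga.
suff kM : kerfg sM aM by exact: (fpT_to_fp (fun c x => hM c x) (genM ga) kM).
exists (rsMof rsA); split; first exact: vanish.
move=> g g0; apply: (cong_idl (claim1 rsA g)); exact: claim2.
Qed.

End Main.

Theorem lemma1 (F : fieldType) (A : algType F) (n : nat) :
  (0 < n)%N -> fin_gen_alg A ->
  (fin_pres_matrix A n <-> fin_pres_alg A).
Proof.
case: n => // n _ [m [a ga]].
have gA : genI (sA A) a.
  move=> x; have [p <-] := ga x; exists (toFA p).
  exact: (esym (nceval_toFA (sA A) a p)).
split => h.
  exact: (dir1 gA h).
exact: (dir2 n gA h).
Qed.
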